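(* Fix the following data: an integer $N_{\text{t}}\ge 2$, constants $\tilde P>0$, $H>0$, $y_{\min}>0$, $v_{\text{A,max}}>0$, $\Delta T>0$, $0<w_{\min}\le w_{\max}\le 1$, $\varepsilon_{\text{out}}\in(0,1)$, and a point $\hat{\mathbf q}_{n-1}\in\mathbb R^2$. Let $\breve{\mathbf q}_n=[\breve x_n,\breve y_n]^T\in\mathbb R^2$ and $w_n$ satisfy $\|\breve{\mathbf q}_n-\hat{\mathbf q}_{n-1}\|\le v_{\text{A,max}}\Delta T$, $\breve y_n\ge y_{\min}$, and $w_{\min}\le w_n\le w_{\max}$, and, for these fixed $\breve{\mathbf q}_n$ and $w_n$, let $\breve{\boldsymbol\Lambda}_n$ and $\hat{\boldsymbol\Lambda}_n$ be the associated $2\times 2$ positive-definite covariance matrices (which do not depend on $\boldsymbol\gamma_n$). Then the function $$\boldsymbol\gamma_n=[\breve\gamma_n,\hat\gamma_n]^T\;\longmapsto\;\tilde\varkappa(\breve{\mathbf q}_n,w_n,\boldsymbol\gamma_n)=\max\bigl(\zeta(\breve\gamma_n;\breve{\boldsymbol\Lambda}_n),\,\zeta(\hat\gamma_n;\hat{\boldsymbol\Lambda}_n)\bigr)-\varepsilon_{\text{out}},$$ defined on $\{\boldsymbol\gamma_n:\ \mathbf 0\prec\boldsymbol\gamma_n\prec\gamma_{\max}\mathbf 1_2\}$ with $\gamma_{\max}=\tilde P N_{\text{t}}/(y_{\min}^2+H^2)$, is monotonically nondecreasing in $\boldsymbol\gamma_n$ (with respect to the componentwise order).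
   Context: Notation: $\prec$ is componentwise strict inequality, $\mathbf 0$ and $\mathbf 1_2$ are the $2\times1$ zero and all-ones vectors, $\mathrm{erf}$ is the error function. Set $M=\frac{N_{\text{t}}\pi^2(N_{\text{t}}^2-1)}{24}$ and $r^2=\breve x_n^2+\breve y_n^2$. For $\gamma>0$ define $D(\gamma)=r^6\gamma+\breve x_n^2\breve y_n^2\tilde P M$, $Y_0=\frac{\breve x_n\breve y_n^3\tilde P M}{D(\gamma)}$, $Y_1=\frac{(\tilde P N_{\text{t}}-H^2\gamma)\,r^6}{D(\gamma)}$, $Y_2=-\frac{r^8\,(r^4\gamma^2+\tilde P M\breve y_n^2\gamma)}{D(\gamma)^2}$, and for $x\in\mathbb R$: $x_{\text U}=-\breve x_n+\sqrt{-Y_1/Y_2}$, $x_{\text L}=-\breve x_n-\sqrt{-Y_1/Y_2}$, $y_{\text U}(x)=-\breve y_n+Y_0(x+\breve x_n)+\sqrt{Y_1+Y_2(x+\breve x_n)^2}$, $y_{\text L}(x)=-\breve y_n+Y_0(x+\breve x_n)-\sqrt{Y_1+Y_2(x+\breve x_n)^2}$. For a positive-definite matrix $\boldsymbol\Lambda=\begin{bmatrix}\Lambda_{\text x}^2&\Lambda_{\text{xy}}^2\\ \Lambda_{\text{xy}}^2&\Lambda_{\text y}^2\end{bmatrix}$ define $\chi_{\text U}(x)=\frac{\Lambda_{\text x}^2 y_{\text U}(x)-\Lambda_{\text{xy}}^2 x}{\sqrt{2|\det\boldsymbol\Lambda|}\,\Lambda_{\text x}}$, $\chi_{\text L}(x)=\frac{\Lambda_{\text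 x}^2 y_{\text L}(x)-\Lambda_{\text{xy}}^2 x}{\sqrt{2|\det\boldsymbol\Lambda|}\,\Lambda_{\text x}}$, $\chi(x)=\frac{\mathrm{erf}(\chi_{\text U}(x))-\mathrm{erf}(\chi_{\text L}(x))}{2}$ if $x\in[x_{\text L},x_{\text U}]$ and $\chi(x)=0$ otherwise, and the approximated outage probability $\zeta(\gamma;\boldsymbol\Lambda)=1-\mathbb E_{x}[\chi(x)]$, where $x\sim\mathcal N(0,\Lambda_{\text x}^2)$. (In the paper, $\zeta(\breve\gamma_n;\breve{\boldsymbol\Lambda}_n)$ and $\zeta(\hat\gamma_n;\hat{\boldsymbol\Lambda}_n)$ are the approximated outage probabilities at the prediction and estimation stages; $\breve{\boldsymbol\Lambda}_n$ and $\hat{\boldsymbol\Lambda}_n$ are the position blocks (entries $(1,1),(1,3),(3,1),(3,3)$) of the EKF prediction and estimation MSE matrices, and in both stages the formulas above use the predicted position $(\breve x_n,\breve y_n)$.) *)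

(* Defs.v *)
From Stdlib Require Import Reals Lra.
From Coquelicot Require Import Coquelicot.
Open Scope R_scope.

Definition erf (z : R) : R :=
  2 / sqrt PI * RInt (fun t => exp (- t ^ 2)) 0 z.

Definition Mconst (Nt : nat) : R := INR Nt * PI ^ 2 * (INR Nt ^ 2 - 1) / 24.

Section Zeta.
Variables (Nt : nat) (Pt H xb yb : R).

Definition r2 : R := xb ^ 2 + yb ^ 2.
Definition Dg (g : R) : R := r2 ^ 3 * g + xb ^ 2 * yb ^ 2 * Pt * Mconst Nt.
Definition Y0 (g : R) : R := xb * yb ^ 3 * Pt * Mconst Nt / Dg g.
Definition Y1 (g : R) : R := (Pt * INR Nt - H ^ 2 * g) * r2 ^ 3 / Dg g.
Definition Y2 (g : R) : R :=
  - (r2 ^ 4 * (r2 ^ 2 * g ^ 2 + Pt * Mconst Nt * yb ^ 2 * g)) / (Dg g) ^ 2.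
Definition xU (g : R) : R := - xb + sqrt (- Y1 g / Y2 g).
Definition xL (g : R) : R := - xb - sqrt (- Y1 g / Y2 g).
Definition yU (g x : R) : R :=
  - yb + Y0 g * (x + xb) + sqrt (Y1 g + Y2 g * (x + xb) ^ 2).
Definition yL (g x : R) : R :=
  - yb + Y0 g * (x + xb) - sqrt (Y1 g + Y2 g * (x + xb) ^ 2).

(* Lambda = [[lx2, lxy2],[lxy2, ly2]] (entries Lambda_x^2, Lambda_xy^2, Lambda_y^2);
   Lambda_x = sqrt lx2. *)
Definition chiU (lx2 lxy2 ly2 g x : R) : R :=
  (lx2 * yU g x - lxy2 * x) / (sqrt (2 * Rabs (lx2 * ly2 - lxy2 ^ 2)) * sqrt lx2).
Definition chiL (lx2 lxy2 ly2 g x : R) : R :=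
  (lx2 * yL g x - lxy2 * x) / (sqrt (2 * Rabs (lx2 * ly2 - lxy2 ^ 2)) * sqrt lx2).
Definition chi (lx2 lxy2 ly2 g x : R) : R :=
  if Rle_dec (xL g) x then
    if Rle_dec x (xU g) then
      (erf (chiU lx2 lxy2 ly2 g x) - erf (chiL lx2 lxy2 ly2 g x)) / 2
    else 0
  else 0.

Definition gauss_pdf (v x : R) : R := exp (- x ^ 2 / (2 * v)) / sqrt (2 * PI * v).

Definition zeta (g lx2 lxy2 ly2 : R) : R :=
  1 - RInt_gen (fun x => chi lx2 lxy2 ly2 g x * gauss_pdf lx2 x)
        (Rbar_locally m_infty) (Rbar_locally p_infty).

End Zeta.

Definition posdef2 (a b c : R) : Prop := 0 < a /\ 0 < a * c - b ^ 2.

Definition kappa_tilde (Nt : nat) (Pt H xb yb eps : R)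
  (Lb Lh : R * R * R) (gb gh : R) : R :=
  let '(ab, bb, cb) := Lb in
  let '(ah, bh, ch) := Lh in
  Rmax (zeta Nt Pt H xb yb gb ab bb cb) (zeta Nt Pt H xb yb gh ah bh ch) - eps.

(* Main.v *)
Require Import Defs.
From Stdlib Require Import Reals Lra Psatz.
From Coquelicot Require Import Coquelicot.
Open Scope R_scope.

Definition Fq Nt Pt H xb yb g u v :=
  g * r2 xb yb ^3 * (u^2+v^2+H^2) + Pt * Mconst Nt * yb^2 * (xb*v - yb*u)^2
  - Pt * INR Nt * r2 xb yb ^3.

Lemma key_id Nt Pt H xb yb g u v : 0 < Dg Nt Pt xb yb g ->
 (v - Y0 Nt Pt xb yb g * u)^2 - Y2 Nt Pt xb yb g * u^2 - Y1 Nt Pt H xb yb g =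
 Fq Nt Pt H xb yb g u v / Dg Nt Pt xb yb g.
Proof.
  intro HD. unfold Y0, Y1, Y2, Fq.
  field_simplify_eq; [| lra].
  unfold Dg, r2. ring.
Qed.

Definition good (Nt : nat) (Pt H xb yb g : R) :=
  0 < Pt /\ 0 < H /\ 0 <= Mconst Nt /\ 0 < yb /\ 0 < g /\ g * H^2 < Pt * INR Nt.

Lemma good_facts Nt Pt H xb yb g : good Nt Pt H xb yb g ->
  0 < Dg Nt Pt xb yb g /\ Y2 Nt Pt xb yb g < 0 /\ 0 < Y1 Nt Pt H xb yb g.
Proof.
  intros (HP & HH & HM & Hy & Hg & Hlt).
  assert (Hr : 0 < r2 xb yb) by (unfold r2; nra).
  assert (HD : 0 < Dg Nt Pt xb yb g).
  { unfold Dg. assert (0 < r2 xb yb ^ 3) by (apply pow_lt; lra).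
    assert (0 <= xb ^ 2 * yb ^ 2 * Pt * Mconst Nt).
    { apply Rmult_le_pos; [|lra]. apply Rmult_le_pos; [|lra]. apply Rmult_le_pos; apply pow2_ge_0. }
    nra. }
  split; [exact HD|split].
  - unfold Y2. assert (0 < r2 xb yb ^ 4) by (apply pow_lt; lra).
    assert (0 < r2 xb yb ^ 2 * g ^ 2) by (apply Rmult_lt_0_compat; apply pow_lt; lra).
    assert (0 <= Pt * Mconst Nt * yb ^ 2 * g).
    { apply Rmult_le_pos; [|lra]. apply Rmult_le_pos; [|apply pow2_ge_0]. nra. }
    assert (0 < Dg Nt Pt xb yb g ^ 2) by (apply pow_lt; lra).
    unfold Rdiv. rewrite Ropp_mult_distr_l_reverse. apply Ropp_lt_gt_0_contravar.
    apply Rmult_lt_0_compat; [nra| apply Rinv_0_lt_compat; lra].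
  - unfold Y1. assert (0 < r2 xb yb ^ 3) by (apply pow_lt; lra).
    unfold Rdiv. apply Rmult_lt_0_compat; [nra| apply Rinv_0_lt_compat; lra].
Qed.

Lemma range_iff Nt Pt H xb yb g x : good Nt Pt H xb yb g ->
  (xL Nt Pt H xb yb g <= x <= xU Nt Pt H xb yb g <->
   0 <= Y1 Nt Pt H xb yb g + Y2 Nt Pt xb yb g * (x + xb) ^ 2).
Proof.
  intro G. destruct (good_facts _ _ _ _ _ _ G) as (HD & H2 & H1).
  unfold xL, xU.
  set (q := - Y1 Nt Pt H xb yb g / Y2 Nt Pt xb yb g).
  assert (Hq : 0 < q).
  { unfold q. replace (- Y1 Nt Pt H xb yb g / Y2 Nt Pt xb yb g) with
      (Y1 Nt Pt H xb yb g * / (- Y2 Nt Pt xb yb g)) by (field; lra).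
    apply Rmult_lt_0_compat; [lra|]. apply Rinv_0_lt_compat; lra. }
  assert (Eq : q * (- Y2 Nt Pt xb yb g) = Y1 Nt Pt H xb yb g) by (unfold q; field; lra).
  assert (Hiff : 0 <= Y1 Nt Pt H xb yb g + Y2 Nt Pt xb yb g * (x + xb) ^ 2 <-> (x+xb)^2 <= q).
  { rewrite <- Eq. clearbody q. set (b := Y2 Nt Pt xb yb g) in *. split; intro K.
    - apply Rmult_le_reg_r with (- b); [lra|]. lra.
    - assert (E : (x + xb) ^ 2 * (- b) <= q * (- b)).
      { apply Rmult_le_compat_r; lra. }
      lra. }
  rewrite Hiff. split.
  - intros [A B]. assert (Rabs (x + xb) <= sqrt q).
    { unfold Rabs; destruct (Rcase_abs (x+xb)); lra. }
    rewrite <- (sqrt_sqrt q) by lra. rewrite <- Rsqr_pow2. rewrite Rsqr_abs.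
    unfold Rsqr. apply Rmult_le_compat; auto using Rabs_pos.
  - intro K. assert (Rabs (x + xb) <= sqrt q).
    { rewrite <- sqrt_Rsqr_abs. apply sqrt_le_1_alt. rewrite Rsqr_pow2. exact K. }
    revert H0. unfold Rabs; destruct (Rcase_abs (x+xb)); intros; lra.
Qed.

Lemma sq_bound a s : a ^ 2 <= s -> 0 <= s /\ - sqrt s <= a <= sqrt s.
Proof.
  intro K. assert (0 <= a ^ 2) by apply pow2_ge_0.
  split; [lra|]. assert (Rabs a <= sqrt s).
  { rewrite <- sqrt_Rsqr_abs. apply sqrt_le_1_alt. rewrite Rsqr_pow2. exact K. }
  revert H0; unfold Rabs; destruct (Rcase_abs a); intros; lra.
Qed.

Lemma Fq_mono Nt Pt H xb yb g g' u v : 0 <= g' - g -> 0 < r2 xb yb ->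
  Fq Nt Pt H xb yb g u v <= Fq Nt Pt H xb yb g' u v.
Proof.
  intros Hg Hr. unfold Fq.
  assert (0 < r2 xb yb ^ 3) by (apply pow_lt; lra).
  assert (0 <= u^2 + v^2 + H^2) by (assert (0 <= u^2) by apply pow2_ge_0;
     assert (0 <= v^2) by apply pow2_ge_0; assert (0 <= H^2) by apply pow2_ge_0; lra).
  assert (0 <= (g' - g) * r2 xb yb ^ 3 * (u^2+v^2+H^2)).
  { apply Rmult_le_pos; [apply Rmult_le_pos|]; lra. }
  nra.
Qed.

Lemma nest Nt Pt H xb yb g g' x :
  good Nt Pt H xb yb g -> good Nt Pt H xb yb g' -> g <= g' ->
  xL Nt Pt H xb yb g' <= x <= xU Nt Pt H xb yb g' ->
  (xL Nt Pt H xb yb g <= x <= xU Nt Pt H xb yb g) /\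
  yL Nt Pt H xb yb g x <= yL Nt Pt H xb yb g' x /\
  yU Nt Pt H xb yb g' x <= yU Nt Pt H xb yb g x.
Proof.
  intros G G' Hgg Hx.
  destruct (good_facts _ _ _ _ _ _ G) as (HD & H2 & H1).
  destruct (good_facts _ _ _ _ _ _ G') as (HD' & H2' & H1').
  assert (Hr : 0 < r2 xb yb) by (destruct G as (_&_&_&Hy&_); unfold r2; nra).
  apply (range_iff _ _ _ _ _ _ x G') in Hx.
  set (u := x + xb) in *.
  set (s' := Y1 Nt Pt H xb yb g' + Y2 Nt Pt xb yb g' * u ^ 2) in *.
  set (s := Y1 Nt Pt H xb yb g + Y2 Nt Pt xb yb g * u ^ 2).
  assert (Hv : forall e, e ^ 2 = s' ->
            (Y0 Nt Pt xb yb g' * u + e - Y0 Nt Pt xb yb g * u) ^ 2 <= s).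
  { intros e He.
    assert (K' := key_id Nt Pt H xb yb g' u (Y0 Nt Pt xb yb g' * u + e) HD').
    assert (F0 : Fq Nt Pt H xb yb g' u (Y0 Nt Pt xb yb g' * u + e) = 0).
    { replace (Fq Nt Pt H xb yb g' u (Y0 Nt Pt xb yb g' * u + e)) with
        (Fq Nt Pt H xb yb g' u (Y0 Nt Pt xb yb g' * u + e) / Dg Nt Pt xb yb g' * Dg Nt Pt xb yb g')
        by (field; lra).
      rewrite <- K'. unfold s' in He.
      replace ((Y0 Nt Pt xb yb g' * u + e - Y0 Nt Pt xb yb g' * u) ^ 2) with (e^2) by ring.
      rewrite He. ring. }
    assert (K := key_id Nt Pt H xb yb g u (Y0 Nt Pt xb yb g' * u + e) HD).
    assert (M := Fq_mono Nt Pt H xb yb g g' u (Y0 Nt Pt xb yb g' * u + e) ltac:(lra) Hr).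
    rewrite F0 in M.
    assert (Fq Nt Pt H xb yb g u (Y0 Nt Pt xb yb g' * u + e) / Dg Nt Pt xb yb g <= 0).
    { unfold Rdiv. apply Rmult_le_0_r; [lra|]. left; apply Rinv_0_lt_compat; lra. }
    unfold s. lra. }
  assert (HsU := Hv (sqrt s') ltac:(rewrite <- Rsqr_pow2; apply Rsqr_sqrt; lra)).
  assert (HsL := Hv (- sqrt s') ltac:(replace ((- sqrt s')^2) with ((sqrt s')^2) by ring;
                                       rewrite <- Rsqr_pow2; apply Rsqr_sqrt; lra)).
  apply sq_bound in HsU. apply sq_bound in HsL.
  split; [apply (range_iff _ _ _ _ _ _ x G); fold u; fold s; lra|].
  unfold yL, yU. fold u. fold s. fold s'. lra.
Qed.

Lemma cont_of_derive (f : R -> R) x : ex_derive f x -> continuous f x.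
Proof. intro Hd. exact (@ex_derive_continuous R_AbsRing R_NormedModule f x Hd). Qed.

Lemma ex_RInt_expsq a b : ex_RInt (fun t => exp (- t ^ 2)) a b.
Proof.
  apply (ex_RInt_continuous (V:=R_CompleteNormedModule)). intros z _. apply cont_of_derive. auto_derive. auto.
Qed.

Lemma erf_mono a b : a <= b -> erf a <= erf b.
Proof.
  intro Hab. unfold erf.
  rewrite <- (RInt_Chasles _ 0 a b) by apply ex_RInt_expsq.
  assert (0 <= RInt (fun t => exp (- t ^ 2)) a b).
  { apply RInt_ge_0; auto using ex_RInt_expsq. intros; left; apply exp_pos. }
  assert (0 < 2 / sqrt PI).
  { unfold Rdiv. apply Rmult_lt_0_compat; [lra|]. apply Rinv_0_lt_compat, sqrt_lt_R0, PI_RGT_0. }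
  change (plus ?x ?y) with (x + y). nra.
Qed.

Lemma cont_plus (f g : R -> R) (x : R) : continuous f x -> continuous g x -> continuous (fun y => f y + g y) x.
Proof. intros; exact (continuous_plus f g x H H0). Qed.
Lemma cont_minus (f g : R -> R) (x : R) : continuous f x -> continuous g x -> continuous (fun y => f y - g y) x.
Proof. intros; exact (continuous_minus f g x H H0). Qed.
Lemma cont_mult (f g : R -> R) (x : R) : continuous f x -> continuous g x -> continuous (fun y => f y * g y) x.
Proof. intros; exact (continuous_mult f g x H H0). Qed.

Lemma cont_const (c x : R) : continuous (fun _ : R => c) x.
Proof. exact (@continuous_const R_UniformSpace R_UniformSpace c x). Qed.
Lemma cont_id (x : R) : continuous (fun y : R => y) x.
Proof. exact (@continuous_id R_UniformSpace x). Qed.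
Lemma cont_sqrt (f : R -> R) (x : R) : continuous f x -> continuous (fun y => sqrt (f y)) x.
Proof. intro H. exact (continuous_sqrt_comp f x H). Qed.

Lemma cont_erf (f : R -> R) (x : R) : continuous f x -> continuous (fun y => erf (f y)) x.
Proof.
  intro Hf. apply (continuous_comp f erf). exact Hf.
  unfold erf. apply cont_mult. apply cont_const.
  apply cont_of_derive. eexists.
  apply (is_derive_RInt (fun t => exp (- t ^ 2)) (fun b => RInt (fun t => exp (- t ^ 2)) 0 b) 0).
  - apply filter_forall. intro b. exact (@RInt_correct R_CompleteNormedModule _ 0 b (ex_RInt_expsq 0 b)).
  - apply cont_of_derive. auto_derive. auto.
Qed.

Lemma supp_is_RInt (f : R -> R) c d a b : a <= c -> c <= d -> d <= b ->
  (forall x, x < c \/ d < x -> f x = 0) -> ex_RInt f c d ->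
  is_RInt f a b (RInt f c d).
Proof.
  intros Hac Hcd Hdb Hz Hex.
  assert (Z : forall p q, (forall x, p < x < q -> f x = 0) -> p <= q -> is_RInt f p q 0).
  { intros p q Hpq Hle. apply (is_RInt_ext (fun _ => 0)).
    - intros x Hx. rewrite Rmin_left, Rmax_right in Hx by lra. symmetry; apply Hpq; lra.
    - assert (E := is_RInt_const (V:=R_NormedModule) p q 0).
      unfold scal in E; simpl in E; unfold mult in E; simpl in E. rewrite Rmult_0_r in E.
      exact E. }
  assert (I1 : is_RInt f a c 0) by (apply Z; [intros; apply Hz; lra | lra]).
  assert (I3 : is_RInt f d b 0) by (apply Z; [intros; apply Hz; lra | lra]).
  assert (I := is_RInt_Chasles f a c b _ _ I1 (is_RInt_Chasles f c d b _ _ (RInt_correct f c d Hex) I3)).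
  unfold plus in I; simpl in I. rewrite Rplus_0_l, Rplus_0_r in I. exact I.
Qed.

Lemma supp_RInt_gen (f : R -> R) c d : c <= d ->
  (forall x, x < c \/ d < x -> f x = 0) -> ex_RInt f c d ->
  RInt_gen f (Rbar_locally m_infty) (Rbar_locally p_infty) = RInt f c d.
Proof.
  intros Hcd Hz Hex. apply is_RInt_gen_unique.
  intros P HP. simpl.
  apply (Filter_prod _ _ _ (fun a => a < c) (fun b => d < b)).
  - exists c; auto.
  - exists d; auto.
  - intros a b Ha Hb. exists (RInt f c d). split.
    + simpl. apply supp_is_RInt; auto; lra.
    + apply locally_singleton; exact HP.
Qed.

Definition Kc (a b c : R) := sqrt (2 * Rabs (a * c - b ^ 2)) * sqrt a.

Lemma Kc_pos a b c : posdef2 a b c -> 0 < Kc a b c.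
Proof.
  intros [Ha Hd]. unfold Kc. apply Rmult_lt_0_compat; apply sqrt_lt_R0; [|lra].
  rewrite Rabs_right by lra. lra.
Qed.

Lemma cdiv_mono a b K y1 y2 x : 0 < a -> 0 < K -> y1 <= y2 ->
  (a * y1 - b * x) / K <= (a * y2 - b * x) / K.
Proof.
  intros. unfold Rdiv. apply Rmult_le_compat_r. left; apply Rinv_0_lt_compat; lra. nra.
Qed.

Lemma yL_le_yU Nt Pt H xb yb g x : yL Nt Pt H xb yb g x <= yU Nt Pt H xb yb g x.
Proof. unfold yL, yU. assert (0 <= sqrt (Y1 Nt Pt H xb yb g + Y2 Nt Pt xb yb g * (x + xb) ^ 2)) by apply sqrt_pos. lra. Qed.

Lemma chi_nonneg Nt Pt H xb yb a b c g x : posdef2 a b c ->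
  0 <= chi Nt Pt H xb yb a b c g x.
Proof.
  intro P. assert (HK := Kc_pos a b c P). destruct P as [Ha _].
  unfold chi. destruct (Rle_dec _ _); [destruct (Rle_dec _ _)|]; try lra.
  assert (erf (chiL Nt Pt H xb yb a b c g x) <= erf (chiU Nt Pt H xb yb a b c g x)); [|lra].
  apply erf_mono. unfold chiL, chiU. fold (Kc a b c).
  apply cdiv_mono; auto. apply yL_le_yU.
Qed.

Lemma chi_le Nt Pt H xb yb a b c g g' x : posdef2 a b c ->
  good Nt Pt H xb yb g -> good Nt Pt H xb yb g' -> g <= g' ->
  chi Nt Pt H xb yb a b c g' x <= chi Nt Pt H xb yb a b c g x.
Proof.
  intros P G G' Hgg.
  assert (HK := Kc_pos a b c P).
  assert (N := chi_nonneg Nt Pt H xb yb a b c g x P).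
  destruct P as [Ha _].
  unfold chi at 1. destruct (Rle_dec _ _) as [h1|h1]; [destruct (Rle_dec _ _) as [h2|h2]|]; try lra.
  destruct (nest Nt Pt H xb yb g g' x G G' Hgg (conj h1 h2)) as ([k1 k2] & L & U).
  unfold chi. destruct (Rle_dec _ _); [destruct (Rle_dec _ _)|]; try lra.
  assert (erf (chiU Nt Pt H xb yb a b c g' x) <= erf (chiU Nt Pt H xb yb a b c g x)).
  { apply erf_mono. unfold chiU. fold (Kc a b c). apply cdiv_mono; auto. }
  assert (erf (chiL Nt Pt H xb yb a b c g x) <= erf (chiL Nt Pt H xb yb a b c g' x)).
  { apply erf_mono. unfold chiL. fold (Kc a b c). apply cdiv_mono; auto. }
  lra.
Qed.

Definition Ef Nt Pt H xb yb a b c g x :=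
  (erf (chiU Nt Pt H xb yb a b c g x) - erf (chiL Nt Pt H xb yb a b c g x)) / 2 * gauss_pdf a x.

Lemma Ef_cont Nt Pt H xb yb a b c g x : 0 < a -> continuous (Ef Nt Pt H xb yb a b c g) x.
Proof.
  intro Ha. unfold Ef. apply cont_mult.
  - unfold Rdiv at 1. apply cont_mult; [|apply cont_const]. apply cont_minus; apply cont_erf.
    + unfold chiU, Rdiv. apply cont_mult; [|apply cont_const]. apply cont_minus.
      * apply cont_mult; [apply cont_const|]. unfold yU. apply cont_plus.
        -- apply cont_of_derive. auto_derive. auto.
        -- apply cont_sqrt. apply cont_of_derive. auto_derive. auto.
      * apply cont_of_derive. auto_derive. auto.
    + unfold chiL, Rdiv. apply cont_mult; [|apply cont_const]. apply cont_minus.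
      * apply cont_mult; [apply cont_const|]. unfold yL. apply cont_minus.
        -- apply cont_of_derive. auto_derive. auto.
        -- apply cont_sqrt. apply cont_of_derive. auto_derive. auto.
      * apply cont_of_derive. auto_derive. auto.
  - unfold gauss_pdf. apply cont_of_derive. auto_derive. 
    assert (0 < sqrt (2 * PI * a)) by (apply sqrt_lt_R0; pose proof PI_RGT_0; nra).
    repeat split; lra.
Qed.

Lemma xL_le_xU Nt Pt H xb yb g : xL Nt Pt H xb yb g <= xU Nt Pt H xb yb g.
Proof.
  unfold xL, xU. assert (0 <= sqrt (- Y1 Nt Pt H xb yb g / Y2 Nt Pt xb yb g)) by apply sqrt_pos. lra.
Qed.

Lemma h_zero Nt Pt H xb yb a b c g x :
  x < xL Nt Pt H xb yb g \/ xU Nt Pt H xb yb g < x ->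
  chi Nt Pt H xb yb a b c g x * gauss_pdf a x = 0.
Proof.
  intro Hx. unfold chi. destruct (Rle_dec _ _); [destruct (Rle_dec _ _)|]; try lra; ring.
Qed.

Lemma h_ex Nt Pt H xb yb a b c g : posdef2 a b c ->
  ex_RInt (fun x => chi Nt Pt H xb yb a b c g x * gauss_pdf a x)
    (xL Nt Pt H xb yb g) (xU Nt Pt H xb yb g).
Proof.
  intros P. assert (Hle := xL_le_xU Nt Pt H xb yb g).
  apply (ex_RInt_ext (Ef Nt Pt H xb yb a b c g)).
  - intros x Hx. rewrite Rmin_left, Rmax_right in Hx by lra.
    unfold chi, Ef. destruct (Rle_dec _ _); [destruct (Rle_dec _ _)|]; try lra.
  - apply (ex_RInt_continuous (V:=R_CompleteNormedModule)). intros z _.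
    apply Ef_cont. destruct P; lra.
Qed.

Lemma zeta_eq Nt Pt H xb yb a b c g : posdef2 a b c ->
  zeta Nt Pt H xb yb g a b c =
  1 - RInt (fun x => chi Nt Pt H xb yb a b c g x * gauss_pdf a x)
        (xL Nt Pt H xb yb g) (xU Nt Pt H xb yb g).
Proof.
  intro P. unfold zeta. f_equal. f_equal.
  apply supp_RInt_gen.
  - apply xL_le_xU.
  - apply h_zero.
  - apply h_ex; auto.
Qed.

Lemma pdf_nonneg a x : 0 < a -> 0 <= gauss_pdf a x.
Proof.
  intro Ha. unfold gauss_pdf, Rdiv. apply Rmult_le_pos. left; apply exp_pos.
  left; apply Rinv_0_lt_compat, sqrt_lt_R0. pose proof PI_RGT_0; nra.
Qed.

Lemma zeta_le Nt Pt H xb yb a b c g g' : posdef2 a b c ->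
  good Nt Pt H xb yb g -> good Nt Pt H xb yb g' -> g <= g' ->
  zeta Nt Pt H xb yb g a b c <= zeta Nt Pt H xb yb g' a b c.
Proof.
  intros P G G' Hgg.
  rewrite !zeta_eq by auto.
  set (h' := fun x => chi Nt Pt H xb yb a b c g' x * gauss_pdf a x).
  set (h := fun x => chi Nt Pt H xb yb a b c g x * gauss_pdf a x).
  assert (A1 := nest Nt Pt H xb yb g g' _ G G' Hgg (conj (Rle_refl _) (xL_le_xU Nt Pt H xb yb g'))).
  assert (A2 := nest Nt Pt H xb yb g g' _ G G' Hgg (conj (xL_le_xU Nt Pt H xb yb g') (Rle_refl _))).
  assert (I := supp_is_RInt h' (xL Nt Pt H xb yb g') (xU Nt Pt H xb yb g')
                 (xL Nt Pt H xb yb g) (xU Nt Pt H xb yb g)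
                 ltac:(lra) (xL_le_xU _ _ _ _ _ _) ltac:(lra)
                 (h_zero Nt Pt H xb yb a b c g') (h_ex Nt Pt H xb yb a b c g' P)).
  assert (Eq : RInt h' (xL Nt Pt H xb yb g) (xU Nt Pt H xb yb g) =
               RInt h' (xL Nt Pt H xb yb g') (xU Nt Pt H xb yb g')).
  { exact (is_RInt_unique (V:=R_CompleteNormedModule) _ _ _ _ I). }
  rewrite <- Eq.
  assert (RInt h' (xL Nt Pt H xb yb g) (xU Nt Pt H xb yb g) <=
          RInt h (xL Nt Pt H xb yb g) (xU Nt Pt H xb yb g)); [|lra].
  apply RInt_le.
  - apply xL_le_xU.
  - exists (RInt h' (xL Nt Pt H xb yb g') (xU Nt Pt H xb yb g')). exact I.
  - apply h_ex; auto.
  - intros x _. unfold h, h'. apply Rmult_le_compat_r.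
    + apply pdf_nonneg. destruct P; lra.
    + apply chi_le; auto.
Qed.

Lemma gbound P H ymin g : 0 < ymin -> 0 < H -> 0 < g -> g < P / (ymin ^ 2 + H ^ 2) -> g * H ^ 2 < P.
Proof.
  intros Hy HH Hg Hlt. assert (Hd : 0 < ymin ^ 2 + H ^ 2) by nra.
  apply (Rmult_lt_compat_r (ymin ^ 2 + H ^ 2)) in Hlt; [|lra].
  replace (P / (ymin ^ 2 + H ^ 2) * (ymin ^ 2 + H ^ 2)) with P in Hlt by (field; lra).
  nra.
Qed.

Theorem proposition2
  (Nt : nat) (Pt H ymin vAmax dT wmin wmax eps : R) (qprev : R * R)
  (xb yb wn : R) (Lb Lh : R * R * R) :
  (2 <= Nt)%nat -> 0 < Pt -> 0 < H -> 0 < ymin -> 0 < vAmax -> 0 < dT ->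
  0 < wmin -> wmin <= wmax -> wmax <= 1 -> 0 < eps < 1 ->
  sqrt ((xb - fst qprev) ^ 2 + (yb - snd qprev) ^ 2) <= vAmax * dT ->
  ymin <= yb -> wmin <= wn <= wmax ->
  (let '(a, b, c) := Lb in posdef2 a b c) ->
  (let '(a, b, c) := Lh in posdef2 a b c) ->
  let gmax := Pt * INR Nt / (ymin ^ 2 + H ^ 2) in
  forall gb gh gb' gh' : R,
    0 < gb < gmax -> 0 < gh < gmax ->
    0 < gb' < gmax -> 0 < gh' < gmax ->
    gb <= gb' -> gh <= gh' ->
    kappa_tilde Nt Pt H xb yb eps Lb Lh gb gh
      <= kappa_tilde Nt Pt H xb yb eps Lb Lh gb' gh'.
Proof.
  intros HN HP HH Hy _ _ _ _ _ _ _ Hyb _ PB PH gmax gb gh gb' gh' H1 H2 H3 H4 L1 L2.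
  unfold gmax in *.
  assert (HM : 0 <= Mconst Nt).
  { unfold Mconst. assert (2 <= INR Nt) by (apply (le_INR 2); exact HN).
    pose proof PI_RGT_0. assert (0 < PI ^ 2) by (apply pow_lt; lra).
    assert (0 < INR Nt ^ 2 - 1) by nra.
    assert (0 < INR Nt * PI ^ 2 * (INR Nt ^ 2 - 1)); [|lra].
    apply Rmult_lt_0_compat; [apply Rmult_lt_0_compat|]; lra. }
  assert (Gd : forall g, 0 < g < Pt * INR Nt / (ymin ^ 2 + H ^ 2) -> good Nt Pt H xb yb g).
  { intros g [Hg1 Hg2]. unfold good. repeat split; try lra.
    apply (gbound _ H ymin); lra. }
  destruct Lb as [[ab bb] cb]. destruct Lh as [[ah bh] ch].
  unfold kappa_tilde.
  assert (Z1 := zeta_le Nt Pt H xb yb ab bb cb gb gb' PB (Gd _ H1) (Gd _ H3) L1).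
  assert (Z2 := zeta_le Nt Pt H xb yb ah bh ch gh gh' PH (Gd _ H2) (Gd _ H4) L2).
  unfold Rmax. destruct (Rle_dec _ _); destruct (Rle_dec _ _); lra.
Qed.
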